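(* Consider an $M^{X}/G/1$ queue operating under the LCFS-p-repeat (with resampling) discipline, with Poisson batch arrivals of rate $\lambda$, i.i.d. batch sizes distributed as $X$ with mean $\mu$, i.i.d. service times distributed as $S$ (all independent), and stable, i.e. $E(e^{-\lambda S})>\mu/(\mu+1)$. Let $X_0$ be the number of customers in the first batch of a busy period, $M$ the maximum number of customers in the system during a busy period, and $M(k)$ a random variable distributed as $M$ conditionally on $X_0=k$. Let $T$ be exponential with rate $\lambda$, independent of $S$, and $I=1$ if $T<S$ and $I=0$ otherwise. Then for $k\geq 1$, $$M(k)=_d I\,M(k+X)+(1-I)\max\{k,M(k-1)\},$$ where $M(0)=0$, $I$, $X$ and $M(k-1)$ are mutually independent, and $M(k+X)$ is independent of $I$ and $M(k-1)$.
   Context: Under LCFS-p-repeat (with resampling), the customer who has been in the system the least amount of time is always served, newly arriving customers preempt the customer in service (customers within a batch are labeled arbitrarily and treated as arriving sequentially), service is non-idling, and a preempted service must be restarted from scratch when service recommences, with a new service time drawn independently from the distribution of $S$. $Y=_dZ$ denotes equality in distribution. *)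

(* Defs.v *)
From HB Require Import structures.
From mathcomp Require Import all_boot all_order all_algebra.
From mathcomp Require Import all_classical all_reals all_analysis.
Set Implicit Arguments. Unset Strict Implicit. Unset Printing Implicit Defensive.
Import Order.TTheory GRing.Theory Num.Theory.
Local Open Scope classical_set_scope.
Local Open Scope ring_scope.

(* Embedded jump chain of the M^X/G/1 LCFS-p-repeat (with resampling) queue
   during a busy period.  At the j-th event epoch (j = 0,1,...) a fresh
   service attempt of length Sv j and a fresh exponential clock Ta j until the
   next batch arrival are run against each other (memorylessness of the
   Poisson arrival stream; under LCFS-p-repeat with resampling every service
   that starts or restarts gets a fresh service time).  If Ta j < Sv j a batch
   of Xb j customers arrives (and preempts); otherwise the customer in service
   departs.  [qlen k w j] is the number of customers in the system right after
   the j-th event of a busy period started by a batch of k customers; it is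
   frozen at 0 once the busy period ends. *)
Section Queue.
Context {d : measure_display} {T : measurableType d} {R : realType}.
Variables (Sv Ta : nat -> T -> R) (Xb : nat -> T -> nat).

Fixpoint qlen (k : nat) (w : T) (j : nat) : nat :=
  match j with
  | 0 => k
  | j'.+1 => let n := qlen k w j' in
             if n == 0%N then 0%N
             else if Ta j' w < Sv j' w then (n + Xb j' w)%N else n.-1
  end.

(* the event { f(M(k)) holds }, where M(k) is the maximum number of
   customers in the system during a busy period started by k customers
   (the busy period must end, i.e. M(k) is a finite maximum). *)
Definition busy_max_ev (k : nat) (f : nat -> Prop) : set T :=
  [set w | exists N : nat, qlen k w N = 0%N /\
                          f (\max_(j < N.+1) qlen k w j)%N].
End Queue.

(* Mutual independence of the whole family (Sv j, Ta j, Xb j)_{j : nat}: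
   product rule over every finite initial segment of indices and every
   choice of measurable sets (taking full sets gives every subfamily). *)
Definition mutually_indep {d} {T : measurableType d} {R : realType}
  (P : probability T R) (Sv Ta : nat -> T -> R) (Xb : nat -> T -> nat) : Prop :=
  forall (n : nat) (A B : nat -> set R) (C : nat -> set nat),
    (forall j, measurable (A j)) -> (forall j, measurable (B j)) ->
    P (\bigcap_(j in [set j | (j < n)%N])
          (Sv j @^-1` A j `&` Ta j @^-1` B j `&` Xb j @^-1` C j)) =
    (\prod_(j < n) (P (Sv j @^-1` A j) * P (Ta j @^-1` B j) * P (Xb j @^-1` C j)))%E.

(* Main.v *)
Require Import Defs.
From HB Require Import structures.
From mathcomp Require Import all_boot all_order all_algebra.
From mathcomp Require Import all_classical all_reals all_analysis.
From mathcomp Require Import ring lra measurable_realfun.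
Import Order.TTheory GRing.Theory Num.Theory.
Local Open Scope classical_set_scope.
Local Open Scope ring_scope.
Lemma pi_lambda {U : Type} (G H : set (set U)) :
  setI_closed G -> dynkin H -> G `<=` H -> <<s G >> `<=` H.
Proof.
move=> GI dH GH; rewrite -setI_closed_g_dynkin_g_sigma_algebra //.
exact: smallest_sub.
Qed.

Section gen.
Variables (d : measure_display) (T : measurableType d) (R : realType).
Variable (P : probability T R).

Lemma PE {A : set T} : measurable A -> P A = (fine (P A))%:E.
Proof. by move=> mA; rewrite fineK //; exact: fin_num_measure. Qed.

Lemma Plt {A : set T} : measurable A -> (P A < +oo)%E.
Proof. by move=> mA; rewrite (PE mA) ltry. Qed.

Lemma dynkin_law {U : Type} (f g : T -> U) :
  dynkin [set C | measurable (f @^-1` C) /\ measurable (g @^-1` C) /\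
                  P (f @^-1` C) = P (g @^-1` C)].
Proof.
split.
- by rewrite /= !preimage_setT; split; [exact: measurableT|split; [exact: measurableT|]].
- move=> C [mf [mg e]]; rewrite /= -!preimage_setC.
  split; [exact: measurableC|split; [exact: measurableC|]].
  by rewrite !probability_setC // e.
- move=> F tF HF; rewrite /= !preimage_bigcup.
  have tr (h : T -> U) : trivIset setT (fun k => h @^-1` F k).
    move=> i j _ _ [w [a b]]; apply: (tF i j I I); by exists (h w).
  split; first by apply: bigcupT_measurable => n; case: (HF n).
  split; first by apply: bigcupT_measurable => n; case: (HF n) => _ [].
  rewrite (measure_bigcup P setT (fun k => f @^-1` F k)); last exact: tr.
    rewrite (measure_bigcup P setT (fun k => g @^-1` F k)); last exact: tr.
      by apply: eq_eseriesr => n _; case: (HF n) => _ [_ e]; exact: e.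
    by move=> n _; case: (HF n) => _ [].
  by move=> n _; case: (HF n).
Qed.

Lemma dynkin_indep (F : set T) : measurable F ->
  dynkin [set E | measurable E /\ P (E `&` F) = (P E * P F)%E].
Proof.
move=> mF; split.
- by rewrite /= setTI probability_setT mul1e; split => //; exact: measurableT.
- move=> E [mE e]; split; first exact: measurableC.
  have e' : P (F `&` E) = (P E * P F)%E by rewrite setIC; exact: e.
  have -> : P (~` E `&` F) = (P F - P E * P F)%E.
    rewrite setIC -setDE measureD // ?Plt //; congr (_ - _)%E; exact: e'.
  rewrite probability_setC //.
  rewrite (PE mE) (PE mF) -!EFinM -!EFinB; congr EFin; ring.
- move=> G tG HG; split; first by apply: bigcupT_measurable => n; case: (HG n).
  rewrite setI_bigcupl (measure_bigcup P setT (fun k => G k `&` F)); last first.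
      move=> i j _ _ [w [[a _] [b _]]]; apply: (tG i j I I); by exists w.
    by move=> n _; apply: measurableI => //; case: (HG n).
  rewrite (measure_bigcup P setT G) //; last by move=> n _; case: (HG n).
  rewrite (PE mF).
  transitivity (\big[+%E/0]_(0 <= i <oo | i \in setT) ((fine (P F))%:E * P (G i)))%E.
    apply: eq_eseriesr => n _; case: (HG n) => _ e; rewrite muleC; rewrite (PE mF) in e; exact: e.
  rewrite nneseriesZl; [exact: muleC | by move=> i _; exact: measure_ge0].
Qed.

End gen.

Section main.
Variables (d : measure_display) (T : measurableType d) (R : realType).
Variable (P : probability T R).
Variables (Sv Ta : nat -> T -> R) (Xb : nat -> T -> nat).
Hypothesis mSv : forall j, measurable_fun setT (Sv j).
Hypothesis mTa : forall j, measurable_fun setT (Ta j).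
Hypothesis mXb : forall j x, measurable (Xb j @^-1` [set x]).
Hypothesis ind : mutually_indep P Sv Ta Xb.

Lemma mSvA j A : measurable A -> measurable (Sv j @^-1` A).
Proof. by move=> mA; rewrite -[_ @^-1` _]setTI; exact: mSv. Qed.

Lemma mTaA j A : measurable A -> measurable (Ta j @^-1` A).
Proof. by move=> mA; rewrite -[_ @^-1` _]setTI; exact: mTa. Qed.

Lemma mXbC j (C : set nat) : measurable (Xb j @^-1` C).
Proof.
have -> : Xb j @^-1` C = \bigcup_n [set w | Xb j w = n /\ C n].
  apply/seteqP; split => [w Cw|w [n _ [<- //]]]; by exists (Xb j w).
apply: bigcupT_measurable => n; case: (pselect (C n)) => Cn.
  have -> : [set w | Xb j w = n /\ C n] = Xb j @^-1` [set n].
    by apply/seteqP; split => [w [] //|w /= ->].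
  exact: mXb.
have -> : [set w | Xb j w = n /\ C n] = set0 by apply/seteqP; split => [w [] //|].
exact: measurable0.
Qed.

Definition rect n (A B : nat -> set R) (C : nat -> set nat) : set T :=
  \bigcap_(j in [set j | (j < n)%N])
     (Sv j @^-1` A j `&` Ta j @^-1` B j `&` Xb j @^-1` C j).

Lemma inrect n A B C w : rect n A B C w <->
  (forall j, (j < n)%N -> A j (Sv j w) /\ B j (Ta j w) /\ C j (Xb j w)).
Proof.
split => [h j jn|h j jn]; first by have [[]] := h j jn.
by have [? []] := h j jn.
Qed.

Lemma mrect n A B C : (forall j, measurable (A j)) -> (forall j, measurable (B j)) ->
  measurable (rect n A B C).
Proof.
move=> mA mB; rewrite /rect bigcap_mkord; apply: bigsetI_measurable => j _.
by apply: measurableI; [apply: measurableI|]; [exact: mSvA|exact: mTaA|exact: mXbC].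
Qed.

Definition triv (A B : nat -> set R) (C : nat -> set nat) j :=
  A j = setT /\ B j = setT /\ C j = setT.

Lemma rect_split n A1 B1 C1 A2 B2 C2 :
  (forall j, measurable (A1 j)) -> (forall j, measurable (B1 j)) ->
  (forall j, measurable (A2 j)) -> (forall j, measurable (B2 j)) ->
  (forall j, triv A1 B1 C1 j \/ triv A2 B2 C2 j) ->
  P (rect n (fun j => A1 j `&` A2 j) (fun j => B1 j `&` B2 j) (fun j => C1 j `&` C2 j))
  = (P (rect n A1 B1 C1) * P (rect n A2 B2 C2))%E.
Proof.
move=> mA1 mB1 mA2 mB2 tr.
rewrite ind; [|by move=> j; apply: measurableI|by move=> j; apply: measurableI].
rewrite ind // ind //.
rewrite -big_split; apply: eq_bigr => j _ /=.
case: (tr j) => [[-> [-> ->]]|[-> [-> ->]]]; rewrite ?setTI ?setIT !preimage_setT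
  !probability_setT ?mul1e ?mule1 //.
Qed.

Definition ext n (A : nat -> set R) j := if (j < n)%N then A j else setT.
Definition extn n (A : nat -> set nat) j := if (j < n)%N then A j else setT.

Lemma rect_widen n N A B C : (n <= N)%N ->
  rect n A B C = rect N (ext n A) (ext n B) (extn n C).
Proof.
move=> nN; apply/seteqP; split => w /inrect h; apply/inrect => j jn.
  by rewrite /ext /extn; case: ifP => // /h.
by have := h j (leq_trans jn nN); rewrite /ext /extn jn.
Qed.

Lemma rectI n A B C A' B' C' :
  rect n A B C `&` rect n A' B' C' =
  rect n (fun j => A j `&` A' j) (fun j => B j `&` B' j) (fun j => C j `&` C' j).
Proof.
apply/seteqP; split => [w [/inrect h /inrect h']|w /inrect h].
  apply/inrect => j jn; have [? [? ?]] := h j jn; have [? [? ?]] := h' j jn; by [].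
split; apply/inrect => j jn; have [[? ?] [[? ?] [? ?]]] := h j jn; by [].
Qed.

Definition single m (A B : set R) (c : set nat) : set T :=
  Sv m @^-1` A `&` Ta m @^-1` B `&` Xb m @^-1` c.

Definition sA (m : nat) (A : set R) (j : nat) := if j == m then A else setT.
Definition sC (m : nat) (c : set nat) (j : nat) := if j == m then c else setT.

Lemma single_rect m A B c : single m A B c = rect m.+1 (sA m A) (sA m B) (sC m c).
Proof.
apply/seteqP; split => [w [[a b] cc]|w /inrect h].
  apply/inrect => j _; rewrite /sA /sC; case: eqP => [->|_]; by repeat split.
by have := h m (ltnSn m); rewrite /sA /sC eqxx => -[a [b cc]]; split; [split|].
Qed.

Lemma P_single m A B c : measurable A -> measurable B ->
  P (single m A B c) = (P (Sv m @^-1` A) * P (Ta m @^-1` B) * P (Xb m @^-1` c))%E.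
Proof.
move=> mA mB; rewrite single_rect ind; last 2 first.
- by move=> j; rewrite /sA; case: ifP.
- by move=> j; rewrite /sA; case: ifP.
rewrite big_ord_recr /= /sA /sC eqxx big1 ?mul1e // => j _.
by rewrite (ltn_eqF (ltn_ord j)) !preimage_setT probability_setT !mul1e.
Qed.


Definition Gat m := [set E : set T | exists A B c, measurable A /\ measurable B /\
  E = single m A B c].
Definition Gaft m := [set F : set T | exists n A B C, (forall j, measurable (A j)) /\
  (forall j, measurable (B j)) /\ (forall j, (j <= m)%N -> triv A B C j) /\
  F = rect n A B C].
Definition G2 m := [set E : set T | exists A B, measurable A /\ measurable B /\
  E = single m A B setT].

Lemma singleI m A B c A' B' c' :
  single m A B c `&` single m A' B' c' = single m (A `&` A') (B `&` B') (c `&` c').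
Proof.
apply/seteqP; split => w; rewrite /single /=.
  by move=> [[[a b] cc] [[a' b'] cc']]; split; [split|]; split.
by move=> [[[a a'] [b b']] [cc cc']]; split; split; [split| |split|].
Qed.

Lemma Gat_I m : setI_closed (Gat m).
Proof.
move=> _ _ [A [B [c [mA [mB ->]]]]] [A' [B' [c' [mA' [mB' ->]]]]].
exists (A `&` A'), (B `&` B'), (c `&` c').
by split; [exact: measurableI|split; [exact: measurableI|exact: singleI]].
Qed.

Lemma G2_I m : setI_closed (G2 m).
Proof.
move=> _ _ [A [B [mA [mB ->]]]] [A' [B' [mA' [mB' ->]]]].
exists (A `&` A'), (B `&` B').
by split; [exact: measurableI|split; [exact: measurableI|rewrite singleI setIid]].
Qed.

Lemma ext_triv n {A : nat -> set R} {j : nat} : A j = setT -> ext n A j = setT.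
Proof. by rewrite /ext; case: ifP. Qed.
Lemma extn_triv n {A : nat -> set nat} {j : nat} : A j = setT -> extn n A j = setT.
Proof. by rewrite /extn; case: ifP. Qed.
Lemma mext n A : (forall j, measurable (A j)) -> forall j, measurable (ext n A j).
Proof. by move=> mA j; rewrite /ext; case: ifP => _; [exact: mA|exact: measurableT]. Qed.
Lemma msA m A : measurable A -> forall j, measurable (sA m A j).
Proof. by move=> mA j; rewrite /sA; case: ifP => _; [exact: mA|exact: measurableT]. Qed.

Lemma Gaft_I m : setI_closed (Gaft m).
Proof.
move=> _ _ [n [A [B [C [mA [mB [tA ->]]]]]]] [n' [A' [B' [C' [mA' [mB' [tA' ->]]]]]]].
exists (maxn n n'), (fun j => ext n A j `&` ext n' A' j),
  (fun j => ext n B j `&` ext n' B' j), (fun j => extn n C j `&` extn n' C' j).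
split; first by move=> j; apply: measurableI; exact: mext.
split; first by move=> j; apply: measurableI; exact: mext.
split.
  move=> j jm; have [a [b c]] := tA j jm; have [a' [b' c']] := tA' j jm.
  by rewrite /triv (ext_triv _ a) (ext_triv _ a') (ext_triv _ b) (ext_triv _ b')
    (extn_triv _ c) (extn_triv _ c') !setTI.
by rewrite (rect_widen _ _ _ _ _ (leq_maxl n n')) (rect_widen _ _ _ _ _ (leq_maxr n n')) rectI.
Qed.

Lemma base m E F : Gat m E -> Gaft m F -> P (E `&` F) = (P E * P F)%E.
Proof.
move=> [A [B [c [mA [mB ->]]]]] [n [A2 [B2 [C2 [mA2 [mB2 [t2 ->]]]]]]].
rewrite single_rect (rect_widen _ _ _ _ _ (leq_maxl m.+1 n))
  (rect_widen _ _ _ _ _ (leq_maxr m.+1 n)) rectI.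
apply: rect_split; try by move=> j; apply: mext; try apply: msA.
move=> j; case: (eqVneq j m) => [->|jm]; [right|left].
  have [a [b cc]] := t2 m (leqnn m).
  by rewrite /triv (ext_triv _ a) (ext_triv _ b) (extn_triv _ cc).
by rewrite /triv /ext /extn /sA /sC (negbTE jm); split; [|split]; case: ifP.
Qed.

Lemma sig_meas (G : set (set T)) : G `<=` measurable -> <<s G >> `<=` measurable.
Proof. by move=> GM; apply: smallest_sub => //; exact: sigma_algebra_measurable. Qed.

Lemma msingle m A B c : measurable A -> measurable B -> measurable (single m A B c).
Proof.
move=> mA mB; apply: measurableI; [apply: measurableI|];
  [exact: mSvA|exact: mTaA|exact: mXbC].
Qed.

Lemma Gat_meas m : Gat m `<=` measurable.
Proof. by move=> _ [A [B [c [mA [mB ->]]]]]; exact: msingle. Qed.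
Lemma G2_meas m : G2 m `<=` measurable.
Proof. by move=> _ [A [B [mA [mB ->]]]]; exact: msingle. Qed.
Lemma Gaft_meas m : Gaft m `<=` measurable.
Proof. by move=> _ [n [A [B [C [mA [mB [_ ->]]]]]]]; exact: mrect. Qed.

Lemma indep m E F : <<s Gat m >> E -> <<s Gaft m >> F ->
  P (E `&` F) = (P E * P F)%E.
Proof.
move=> hE hF.
have stA : forall F0, Gaft m F0 -> P (E `&` F0) = (P E * P F0)%E.
  move=> F0 GF0.
  have h := pi_lambda _ _ (Gat_I m) (dynkin_indep _ _ _ P _ (Gaft_meas m F0 GF0))
    (fun E0 GE0 => conj (Gat_meas m E0 GE0) (base m E0 F0 GE0 GF0)).
  by case: (h _ hE).
have mE := sig_meas _ (@Gat_meas m) E hE.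
have GH : Gaft m `<=` [set F0 | measurable F0 /\ P (F0 `&` E) = (P F0 * P E)%E].
  move=> F0 GF0; split; first exact: (Gaft_meas m F0 GF0).
  rewrite setIC muleC; exact: stA.
have h := pi_lambda _ _ (Gaft_I m) (dynkin_indep _ _ _ P _ mE) GH.
case: (h _ hF) => _ e; rewrite setIC muleC; exact: e.
Qed.

Lemma rat_between (x y : R) : y < x <-> exists n, match (unpickle n : option rat) with
  Some q => y < ratr q /\ ratr q < x | None => False end.
Proof.
split.
  move=> /rat_in_itvoo [q]; rewrite in_itv /= => /andP [a b].
  by exists (pickle q); rewrite pickleK.
move=> [n]; case: unpickle => // q [a b]; exact: lt_trans a b.
Qed.

Definition ltS m := [set w | Ta m w < Sv m w].
Definition geS m := [set w | Sv m w <= Ta m w].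
Definition qset m n : set T := match (unpickle n : option rat) with
  Some q => single m `]ratr q, +oo[ `]-oo, ratr q[ setT | None => set0 end.

Lemma ltSE m : ltS m = \bigcup_n qset m n.
Proof.
apply/seteqP; split => w.
  move=> /rat_between [n h]; exists n => //; move: h; rewrite /qset.
  case: unpickle => // q [a b]; rewrite /single /=.
  by split; [split|]; rewrite //= in_itv /= ?a ?b.
move=> [n _]; rewrite /qset; case E: unpickle => [q|] // [[a b] _].
apply/rat_between; exists n; rewrite E; move: a b; rewrite /= !in_itv /= andbT.
by move=> a b; split.
Qed.

Lemma geSE m : geS m = ~` ltS m.
Proof.
apply/seteqP; split => w; rewrite /geS /ltS /=.
  by move=> h1 h2; have := lt_le_trans h2 h1; rewrite ltxx.
by move=> h; rewrite leNgt; apply/negP.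
Qed.

Lemma sigC (G : set (set T)) A : <<s G >> A -> <<s G >> (~` A).
Proof. have [_ hC _] := smallest_sigma_algebra setT G; rewrite -setTD; exact: hC. Qed.

Lemma ltS_sig (G : set (set T)) m :
  (forall A B, measurable A -> measurable B -> G (single m A B setT)) ->
  <<s G >> (ltS m).
Proof.
move=> hG; rewrite ltSE; have [h0 _ hU] := smallest_sigma_algebra setT G.
apply: hU => n; rewrite /qset; case: unpickle => [q|]; last exact: h0.
by apply: sub_sigma_algebra; apply: hG; exact: measurable_itv.
Qed.

Lemma I2 m x : P (ltS m `&` Xb m @^-1` [set x]) = (P (ltS m) * P (Xb m @^-1` [set x]))%E.
Proof.
have GH : G2 m `<=` [set E | measurable E /\
    P (E `&` Xb m @^-1` [set x]) = (P E * P (Xb m @^-1` [set x]))%E].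
  move=> _ [A [B [mA [mB ->]]]]; split; first exact: msingle.
  have -> : single m A B setT `&` Xb m @^-1` [set x] = single m A B [set x].
    by rewrite /single preimage_setT setIT.
  by rewrite !P_single // preimage_setT probability_setT mule1.
have h := pi_lambda _ _ (@G2_I m) (dynkin_indep _ _ _ P _ (mXb m x)) GH.
have hl : <<s G2 m >> (ltS m).
  by apply: ltS_sig => A B mA mB; exists A, B.
by case: (h _ hl).
Qed.


Lemma ltS_Gat m : <<s Gat m >> (ltS m).
Proof. by apply: ltS_sig => A B mA mB; exists A, B, setT. Qed.

Lemma mltS m : measurable (ltS m).
Proof. exact: (sig_meas _ (@Gat_meas m) _ (ltS_Gat m)). Qed.

Lemma mgeS m : measurable (geS m).
Proof. by rewrite geSE; apply: measurableC; exact: mltS. Qed.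

Variable lam : R.
Hypothesis TaD : forall j (t : R), 0 <= t -> P [set w | t < Ta j w] = (expR (- (lam * t)))%:E.
Hypothesis SvD : forall j (A : set R), measurable A -> P (Sv j @^-1` A) = P (Sv 0%N @^-1` A).

Lemma tail j t : P (Ta j @^-1` `]t, +oo[) =
  if 0 <= t then (expR (- (lam * t)))%:E else 1%E.
Proof.
have e : Ta j @^-1` `]t, +oo[ = [set w | t < Ta j w].
  by apply/seteqP; split => w /=; rewrite in_itv /= andbT.
have mt : measurable [set w | t < Ta j w].
  by rewrite -e; apply: mTaA; exact: measurable_itv.
rewrite e; case: ifP => t0; first exact: TaD.
move/negbT: t0; rewrite -ltNge => t0.
have m0 : measurable [set w | 0 < Ta j w].
  have e0 : Ta j @^-1` `]0, +oo[ = [set w | 0 < Ta j w].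
    by apply/seteqP; split => w /=; rewrite in_itv /= andbT.
  by rewrite -e0; apply: mTaA; exact: measurable_itv.
apply/eqP; rewrite eq_le probability_le1 //=.
have <- : P [set w | 0 < Ta j w] = 1%E by rewrite TaD // mulr0 oppr0 expR0.
apply: le_measure; rewrite ?inE //.
by move=> w /= h; exact: lt_trans t0 h.
Qed.

Lemma TaLaw m B : measurable B -> P (Ta m @^-1` B) = P (Ta 0 @^-1` B).
Proof.
move=> mB.
have GI : setI_closed (@RGenOInfty.G R).
  move=> _ _ [x ->] [y ->]; exists (Num.max x y).
  apply/seteqP; split => z /=; rewrite !in_itv /= !andbT.
    by move=> [a b]; rewrite gt_max a b.
  by rewrite gt_max => /andP[a b].
have GH : @RGenOInfty.G R `<=` [set C | measurable (Ta m @^-1` C) /\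
   measurable (Ta 0 @^-1` C) /\ P (Ta m @^-1` C) = P (Ta 0 @^-1` C)].
  move=> _ [x ->]; split; first by apply: mTaA; exact: measurable_itv.
  split; first by apply: mTaA; exact: measurable_itv.
  by rewrite !tail.
have h := pi_lambda _ _ GI (dynkin_law _ _ _ P (Ta m) (Ta 0)) GH.
have hm : @measurable _ R = <<s @RGenOInfty.G R >> := RGenOInfty.measurableE R.
rewrite hm in mB.
by case: (h _ mB) => _ [_ e].
Qed.

Definition pr m (w : T) : R * R := (Sv m w, Ta m w).
Definition GX := [set C : set (R * R) | exists A B, measurable A /\ measurable B /\
  C = A `*` B].
Definition ltset := [set z : R * R | z.2 < z.1].

Lemma ltset_sig : <<s GX >> ltset.
Proof.
have -> : ltset = \bigcup_n (match (unpickle n : option rat) with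
   Some q => `]ratr q, +oo[ `*` `]-oo, ratr q[ | None => set0 end).
  apply/seteqP; split => -[x y] /=.
    move=> /rat_between [n h]; exists n => //; move: h.
    by case: unpickle => // q [a b] /=; rewrite !in_itv /= a b.
  move=> [n _]; case E: unpickle => [q|] //= [a b].
  apply/rat_between; exists n; rewrite E; move: a b; rewrite !in_itv /= andbT.
  by move=> a b; split.
have [h0 _ hU] := smallest_sigma_algebra setT GX.
apply: hU => n; case: unpickle => [q|]; last exact: h0.
apply: sub_sigma_algebra; exists `]ratr q, +oo[%classic, `]-oo, ratr q[%classic.
by split; [exact: measurable_itv|split; [exact: measurable_itv|]].
Qed.

Lemma I3 m : P (ltS m) = P (ltS 0).
Proof.
have GI : setI_closed GX.
  move=> _ _ [A [B [mA [mB ->]]]] [A' [B' [mA' [mB' ->]]]].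
  exists (A `&` A'), (B `&` B'); split; first exact: measurableI.
  split; first exact: measurableI.
  apply/seteqP; split => -[x y] /=; tauto.
have prE j A B : pr j @^-1` (A `*` B) = single j A B setT.
  by apply/seteqP; split => w; rewrite /single /pr /=; tauto.
have GH : GX `<=` [set C | measurable (pr m @^-1` C) /\
   measurable (pr 0 @^-1` C) /\ P (pr m @^-1` C) = P (pr 0 @^-1` C)].
  move=> _ [A [B [mA [mB ->]]]] /=; rewrite !prE.
  split; first exact: msingle.
  split; first exact: msingle.
  by rewrite !P_single // SvD // TaLaw // !preimage_setT !probability_setT.
have h := pi_lambda _ _ GI (dynkin_law _ _ _ P (pr m) (pr 0)) GH.
by case: (h _ ltset_sig) => _ [_ e].
Qed.

Lemma I3' m : P (geS m) = P (geS 0).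
Proof. by rewrite !geSE !probability_setC ?I3 //; exact: mltS. Qed.


Hypothesis XbD : forall j (x : nat), P (Xb j @^-1` [set x]) = P (Xb 0%N @^-1` [set x]).

Lemma sigU (G : set (set T)) A B : <<s G >> A -> <<s G >> B -> <<s G >> (A `|` B).
Proof.
move=> hA hB; rewrite -bigcup2E; have [h0 _ hU] := smallest_sigma_algebra setT G.
by apply: hU => -[|[|n]].
Qed.

Lemma sigI (G : set (set T)) A B : <<s G >> A -> <<s G >> B -> <<s G >> (A `&` B).
Proof.
move=> hA hB; rewrite -[A `&` B]setCK setCI.
by apply: sigC; apply: sigU; apply: sigC.
Qed.

Lemma sigUn (G : set (set T)) (F : nat -> set T) : (forall n, <<s G >> (F n)) ->
  <<s G >> (\bigcup_n F n).
Proof. by have [_ _ hU] := smallest_sigma_algebra setT G; apply: hU. Qed.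

Lemma sigK (G : set (set T)) (p : Prop) : <<s G >> [set _ : T | p].
Proof.
have [h0 _ _] := smallest_sigma_algebra setT G.
case: (pselect p) => hp.
  have -> : [set _ : T | p] = ~` set0 by apply/seteqP; split => w // _ [].
  exact: sigC.
by have -> : [set _ : T | p] = set0 by apply/seteqP; split => w.
Qed.

Lemma single_Gaft m' m A B c : (m' < m)%N -> measurable A -> measurable B ->
  Gaft m' (single m A B c).
Proof.
move=> mm mA mB; exists m.+1, (sA m A), (sA m B), (sC m c).
split; first exact: msA.
split; first exact: msA.
split; last exact: single_rect.
move=> j jm; have jn : (j == m) = false.
  by apply: ltn_eqF; exact: leq_ltn_trans jm mm.
by rewrite /triv /sA /sC jn.
Qed.

Lemma X_sig (G : set (set T)) m x :
  (forall A B c, measurable A -> measurable B -> G (single m A B c)) ->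
  <<s G >> (Xb m @^-1` [set x]).
Proof.
move=> hG; have -> : Xb m @^-1` [set x] = single m setT setT [set x].
  by rewrite /single !preimage_setT !setTI.
by apply: sub_sigma_algebra; apply: hG; exact: measurableT.
Qed.

Fixpoint Aev (m N k : nat) (f : nat -> Prop) : set T :=
  match N with
  | 0 => [set _ | k = 0%N /\ f 0%N]
  | N'.+1 => [set w | if k == 0%N then f 0%N else
      if Ta m w < Sv m w then Aev m.+1 N' (k + Xb m w) (fun t => f (maxn k t)) w
      else Aev m.+1 N' k.-1 (fun t => f (maxn k t)) w]
  end.

Definition Bev m k f := \bigcup_N Aev m N k f.

Lemma Aev_dec m N k f : k != 0%N -> Aev m N.+1 k f =
  (ltS m `&` \bigcup_x (Xb m @^-1` [set x] `&` Aev m.+1 N (k + x) (fun t => f (maxn k t))))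
  `|` (geS m `&` Aev m.+1 N k.-1 (fun t => f (maxn k t))).
Proof.
move=> k0; apply/seteqP; split => w /=; rewrite (negbTE k0).
  case: ifP => h A.
    by left; split => //; exists (Xb m w).
  by right; split => //; rewrite /geS /= leNgt h.
move=> [[lt [x _ [ex A]]]|[ge A]].
  by rewrite /ltS /= in lt; rewrite lt ex.
by have -> : (Ta m w < Sv m w) = false by rewrite ltNge ge.
Qed.

Lemma Aev_sig N : forall (G : set (set T)) m k f,
  (forall m0 A B c, (m <= m0)%N -> measurable A -> measurable B -> G (single m0 A B c)) ->
  <<s G >> (Aev m N k f).
Proof.
elim: N => [|N IH] G m k f hG; first exact: sigK.
case: (eqVneq k 0%N) => [->|k0]; first exact: sigK.
have IH' k' f' : <<s G >> (Aev m.+1 N k' f').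
  by apply: IH => m0 A B c h; apply: hG; exact: ltnW.
rewrite Aev_dec //; apply: sigU; apply: sigI => //.
- by apply: ltS_sig => A B mA mB; exact: hG.
- apply: sigUn => x; apply: sigI => //.
  by apply: X_sig => A B c mA mB; exact: hG.
- by rewrite geSE; apply: sigC; apply: ltS_sig => A B mA mB; exact: hG.
Qed.

Lemma Aev_Gaft m' m N k f : (m' < m)%N -> <<s Gaft m' >> (Aev m N k f).
Proof.
move=> mm; apply: Aev_sig => m0 A B c h mA mB; apply: single_Gaft => //.
exact: leq_trans mm h.
Qed.

Lemma Bev_sig m' m k f : (m' < m)%N -> <<s Gaft m' >> (Bev m k f).
Proof. by move=> mm; apply: sigUn => N; exact: Aev_Gaft. Qed.

Lemma mAev m N k f : measurable (Aev m N k f).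
Proof.
apply: (sig_meas _ (fun E (h : measurable E) => h)).
by apply: Aev_sig => m0 A B c _ mA mB; exact: msingle.
Qed.

Lemma mBev m k f : measurable (Bev m k f).
Proof. by apply: bigcupT_measurable => N; exact: mAev. Qed.


Lemma geS_Gat m : <<s Gat m >> (geS m).
Proof. by rewrite geSE; apply: sigC; exact: ltS_Gat. Qed.

Lemma ltX_Gat m x : <<s Gat m >> (ltS m `&` Xb m @^-1` [set x]).
Proof.
apply: sigI; first exact: ltS_Gat.
by apply: X_sig => A B c mA mB; exists A, B, c.
Qed.

Lemma sum_setT (f : nat -> \bar R) :
  (\big[+%E/0]_(0 <= i <oo | i \in [set: nat]) f i = \sum_(0 <= i <oo) f i)%E.
Proof. by apply: eq_eseriesl => i; rewrite in_setT. Qed.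

Lemma Pdec m k (Q : nat -> set T) (Q' : set T) :
  (forall y, <<s Gaft m >> (Q y)) -> <<s Gaft m >> Q' ->
  P ((ltS m `&` \bigcup_x (Xb m @^-1` [set x] `&` Q (k + x)%N)) `|` (geS m `&` Q')) =
  (P (ltS m) * (\sum_(0 <= x <oo) (P (Xb m @^-1` [set x]) * P (Q (k + x)%N)))
   + P (geS m) * P Q')%E.
Proof.
move=> hQ hQ'.
have mQ y : measurable (Q y) := sig_meas _ (@Gaft_meas m) _ (hQ y).
have mQ' : measurable Q' := sig_meas _ (@Gaft_meas m) _ hQ'.
set L := ltS m `&` _.
have mL : measurable L.
  apply: measurableI; first exact: mltS.
  by apply: bigcupT_measurable => x; apply: measurableI.
have mM : measurable (geS m `&` Q') by apply: measurableI => //; exact: mgeS.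
have disj : L `&` (geS m `&` Q') = set0.
  apply/seteqP; split => // w [[lt _] [ge _]].
  by move: ge lt; rewrite /geS /ltS /= => ge lt; rewrite leNgt lt in ge.
have eU : P (L `|` (geS m `&` Q')) = (P L + P (geS m `&` Q'))%E.
  by rewrite measureU.
have eM : P (geS m `&` Q') = (P (geS m) * P Q')%E := indep m _ _ (geS_Gat m) hQ'.
have e2 : L = \bigcup_x ((ltS m `&` Xb m @^-1` [set x]) `&` Q (k + x)%N).
  by rewrite /L setI_bigcupr; apply: eq_bigcupr => x _; rewrite setIA.
have tr : trivIset setT (fun x => (ltS m `&` Xb m @^-1` [set x]) `&` Q (k + x)%N).
  by move=> i j _ _ [w [[[_ a] _] [[_ b] _]]]; rewrite -a -b.
have e3 : P L = (\sum_(0 <= x <oo)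
   P ((ltS m `&` Xb m @^-1` [set x]) `&` Q (k + x)%N))%E.
  rewrite e2 -sum_setT measure_bigcup //.
  move=> x _; apply: measurableI => //; apply: measurableI; [exact: mltS|exact: mXb].
have e4 : (\sum_(0 <= x <oo) P ((ltS m `&` Xb m @^-1` [set x]) `&` Q (k + x)%N))%E =
   (\sum_(0 <= x <oo) ((fine (P (ltS m)))%:E *
      (P (Xb m @^-1` [set x]) * P (Q (k + x)%N))))%E.
  apply: eq_eseriesr => x _.
  rewrite (indep m _ _ (ltX_Gat m x) (hQ _)) I2 muleA -(PE _ _ _ P (mltS m)) //.
rewrite eU eM e3 e4 nneseriesZl -?(PE _ _ _ P (mltS m)) //.
move=> x _; apply: mule_ge0; exact: measure_ge0.
Qed.

Lemma Aev_shift N : forall m k f, P (Aev m N k f) = P (Aev 0 N k f).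
Proof.
elim: N => [//|N IH] m k f.
case: (eqVneq k 0%N) => [->//|k0].
rewrite !Aev_dec //.
rewrite (Pdec m k (fun y => Aev m.+1 N y (fun t => f (maxn k t)))); last 2 first.
- by move=> y; apply: Aev_Gaft.
- by apply: Aev_Gaft.
rewrite (Pdec 0 k (fun y => Aev 1 N y (fun t => f (maxn k t)))); last 2 first.
- by move=> y; apply: Aev_Gaft.
- by apply: Aev_Gaft.
rewrite I3 I3' (IH m.+1 k.-1) (IH 1%N k.-1).
congr (_ * _ + _)%E; apply: eq_eseriesr => x _.
by rewrite XbD (IH m.+1) (IH 1%N).
Qed.

Lemma Aev_mono N : forall m k f, Aev m N k f `<=` Aev m N.+1 k f.
Proof.
elim: N => [|N IH] m k f w /=.
  by move=> [-> f0].
case: (k == 0%N) => //; case: ifP => _; exact: IH.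
Qed.

Lemma Bev_shift m k f : P (Bev m k f) = P (Bev 0 k f).
Proof.
have cv m0 : (fun N => P (Aev m0 N k f)) x @[x --> \oo] --> P (Bev m0 k f).
  apply: nondecreasing_cvg_mu; [move=> N; exact: mAev|exact: mBev|].
  by apply/nondecreasing_seqP => N; apply/subsetPset; exact: Aev_mono.
have e : (fun N => P (Aev m N k f)) = (fun N => P (Aev 0 N k f)).
  by apply: funext => N; exact: Aev_shift.
have h1 := cv m; rewrite e in h1.
exact: (cvg_unique (@ereal_hausdorff R) h1 (cv 0%N)).
Qed.

Lemma Bev_dec m k f : k != 0%N -> Bev m k f =
  (ltS m `&` \bigcup_x (Xb m @^-1` [set x] `&` Bev m.+1 (k + x) (fun t => f (maxn k t))))
  `|` (geS m `&` Bev m.+1 k.-1 (fun t => f (maxn k t))).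
Proof.
move=> k0; apply/seteqP; split => w.
  move=> [[|N] _ A]; first by move: A => /= [k0' _]; rewrite k0' in k0.
  rewrite Aev_dec // in A.
  case: A => [[lt [x _ [ex A]]]|[ge A]].
    by left; split => //; exists x => //; split => //; exists N.
  by right; split => //; exists N.
move=> [[lt [x _ [ex [N _ A]]]]|[ge [N _ A]]]; exists N.+1 => //; rewrite Aev_dec //.
  by left; split => //; exists x => //; split.
by right.
Qed.


Definition Sh {U : Type} m (F : nat -> T -> U) := fun i => F (i + m)%N.

Lemma Sh_S {U : Type} m (F : nat -> T -> U) : (fun i => Sh m F i.+1) = Sh m.+1 F.
Proof. by apply: funext => i; rewrite /Sh addSnnS. Qed.

Lemma Sh0 {U : Type} (F : nat -> T -> U) : Sh 0 F = F.
Proof. by apply: funext => i; rewrite /Sh addn0. Qed.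

Lemma qlen_unroll (S' T' : nat -> T -> R) (X' : nat -> T -> nat) k w j :
  qlen S' T' X' k w j.+1 = if k == 0%N then 0%N else
   qlen (fun i => S' i.+1) (fun i => T' i.+1) (fun i => X' i.+1)
     (if T' 0%N w < S' 0%N w then (k + X' 0%N w)%N else k.-1) w j.
Proof.
elim: j => [|j IH]; first by rewrite /=; case: (k == 0%N).
have -> : qlen S' T' X' k w j.+2 = (let n := qlen S' T' X' k w j.+1 in
  if n == 0%N then 0%N else if T' j.+1 w < S' j.+1 w then (n + X' j.+1 w)%N else n.-1).
  by [].
by rewrite IH; case: (k == 0%N).
Qed.

Lemma qlen_zero (S' T' : nat -> T -> R) (X' : nat -> T -> nat) w j :
  qlen S' T' X' 0 w j = 0%N.
Proof. by elim: j => //= j ->. Qed.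

Lemma qlen_unroll_sh m k w j :
  qlen (Sh m Sv) (Sh m Ta) (Sh m Xb) k w j.+1 = if k == 0%N then 0%N else
  qlen (Sh m.+1 Sv) (Sh m.+1 Ta) (Sh m.+1 Xb)
    (if Ta m w < Sv m w then (k + Xb m w)%N else k.-1) w j.
Proof. by rewrite qlen_unroll !Sh_S. Qed.

Lemma Aev_char N : forall m k f w, Aev m N k f w <->
  (qlen (Sh m Sv) (Sh m Ta) (Sh m Xb) k w N = 0%N /\
   f (\max_(j < N.+1) qlen (Sh m Sv) (Sh m Ta) (Sh m Xb) k w j)%N).
Proof.
elim: N => [|N IH] m k f w.
  rewrite big_ord1 /=; split => [[-> f0]|[-> f0]]; by split.
case: (eqVneq k 0%N) => [->|k0].
  have -> : (\max_(j < N.+2) qlen (Sh m Sv) (Sh m Ta) (Sh m Xb) 0 w j)%N = 0%N.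
    by apply: big1 => j _; exact: qlen_zero.
  rewrite qlen_zero /=; split => [f0|[_ f0]] //.
have -> : Aev m N.+1 k f w = Aev m.+1 N (if Ta m w < Sv m w then (k + Xb m w)%N else k.-1)
    (fun t => f (maxn k t)) w.
  by rewrite /= (negbTE k0); case: ifP.
have E : (\max_(j < N.+2) qlen (Sh m Sv) (Sh m Ta) (Sh m Xb) k w j)%N =
  maxn k (\max_(j < N.+1) qlen (Sh m.+1 Sv) (Sh m.+1 Ta) (Sh m.+1 Xb)
     (if (Ta m w < Sv m w)%R then (k + Xb m w)%N else k.-1) w j)%N.
  rewrite big_ord_recl; congr maxn; apply: eq_bigr => i _.
  by rewrite lift0 qlen_unroll_sh (negbTE k0).
by rewrite E IH qlen_unroll_sh (negbTE k0).
Qed.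

Lemma busy_eq k f : busy_max_ev Sv Ta Xb k f = Bev 0 k f.
Proof.
apply/seteqP; split => w.
  move=> [N h]; exists N => //; apply/Aev_char; rewrite !Sh0; exact: h.
by move=> [N _ /Aev_char h]; exists N; rewrite !Sh0 in h; exact: h.
Qed.

Lemma busy_ext k (f1 f2 : nat -> Prop) : (forall t, f1 t <-> f2 t) ->
  busy_max_ev Sv Ta Xb k f1 = busy_max_ev Sv Ta Xb k f2.
Proof.
move=> H; apply/seteqP; split => w [N [h1 h2]]; exists N; split => //; exact/H.
Qed.

Lemma busy_max k x n : busy_max_ev Sv Ta Xb (k + x) (fun t => n = maxn k t) =
  busy_max_ev Sv Ta Xb (k + x) (eq n).
Proof.
apply/seteqP; split => w [N [h1 h2]]; exists N; split => //;
have hk : (k <= \max_(j < N.+1) qlen Sv Ta Xb (k + x) w j)%N by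
  apply: leq_trans (leq_addr x k)
    (leq_bigmax (F := fun j : 'I_N.+1 => qlen Sv Ta Xb (k + x) w j) ord0).
  by rewrite (maxn_idPr hk) in h2.
by rewrite (maxn_idPr hk).
Qed.

Lemma main_thm k : (1 <= k)%N -> forall n : nat,
    P (busy_max_ev Sv Ta Xb k (eq n)) =
    (P [set w | (Ta 0%N w < Sv 0%N w)%R] *
       (\sum_(0 <= x <oo)
           P (Xb 0%N @^-1` [set x]) * P (busy_max_ev Sv Ta Xb (k + x) (eq n)))
     + P [set w | (Sv 0%N w <= Ta 0%N w)%R] *
         P (busy_max_ev Sv Ta Xb k.-1 (fun m => maxn k m = n)))%E.
Proof.
move=> k1 n; have k0 : k != 0%N by rewrite -lt0n.
rewrite busy_eq (Bev_dec 0 k (eq n) k0).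
rewrite (Pdec 0 k (fun y => Bev 1 y (fun t => n = maxn k t))); last 2 first.
- by move=> y; apply: Bev_sig.
- by apply: Bev_sig.
congr (_ * _ + _ * _)%E.
- apply: eq_eseriesr => x _; congr (_ * _)%E.
  by rewrite Bev_shift -busy_eq busy_max.
- rewrite Bev_shift -busy_eq; apply: congr1; apply: busy_ext => t; by split => ->.
Qed.

End main.

Theorem theorem3 (d : measure_display) (T : measurableType d) (R : realType)
  (P : probability T R) (lam mu : R)
  (Sv Ta : nat -> T -> R) (Xb : nat -> T -> nat) :
  (* Poisson batch arrivals of rate lam: clocks Ta j ~ Exp(lam) *)
  0 < lam ->
  (forall j, measurable_fun setT (Ta j)) ->
  (forall j (t : R), 0 <= t -> P [set w | t < Ta j w] = (expR (- (lam * t)))%:E) ->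
  (* i.i.d. service times distributed as S := Sv 0 (nonnegative) *)
  (forall j, measurable_fun setT (Sv j)) ->
  (forall j, P [set w | Sv j w < 0] = 0%E) ->
  (forall j (A : set R), measurable A -> P (Sv j @^-1` A) = P (Sv 0%N @^-1` A)) ->
  (* i.i.d. batch sizes distributed as X := Xb 0 (positive), with mean mu *)
  (forall j (x : nat), measurable (Xb j @^-1` [set x])) ->
  (forall j, P (Xb j @^-1` [set 0%N]) = 0%E) ->
  (forall j (x : nat), P (Xb j @^-1` [set x]) = P (Xb 0%N @^-1` [set x])) ->
  (\int[P]_w ((Xb 0%N w)%:R : R)%:E = mu%:E)%E ->
  (* all independent *)
  mutually_indep P Sv Ta Xb ->
  (* stability: E(exp(-lam S)) > mu/(mu+1) *)
  ((mu / (mu + 1))%:E < \int[P]_w (expR (- (lam * Sv 0%N w)))%:E)%E ->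
  (* M(k) =_d I M(k+X) + (1-I) max{k, M(k-1)},  with I = 1{T < S} *)
  forall k : nat, (1 <= k)%N -> forall n : nat,
    P (busy_max_ev Sv Ta Xb k (eq n)) =
    (P [set w | (Ta 0%N w < Sv 0%N w)%R] *
       (\sum_(0 <= x <oo)
           P (Xb 0%N @^-1` [set x]) * P (busy_max_ev Sv Ta Xb (k + x) (eq n)))
     + P [set w | (Sv 0%N w <= Ta 0%N w)%R] *
         P (busy_max_ev Sv Ta Xb k.-1 (fun m => maxn k m = n)))%E.
Proof.
move=> _ mTa TaD mSv _ SvD mXb _ XbD _ ind _ k k1 n.
exact: (main_thm _ _ _ P Sv Ta Xb mSv mTa mXb ind lam TaD SvD XbD k k1 n).
Qed.
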